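(* Let $\mathbb F$ be a field. For $u,v\in\mathbb F$ let $\mathcal D(u,v)$ be the $2\times2\times2$ spatial matrix with horizontal slices \[ \mathcal D(u,v)=\left\|\begin{bmatrix}1&0\\0&1\end{bmatrix}\middle|\begin{bmatrix}0&v\\1&u\end{bmatrix}\right\|. \] Then $\mathcal D(u,v)$ is equivalent to $\mathcal D(u',v')$ ($u',v'\in\mathbb F$) if and only if there exist $a,b,c,d\in\mathbb F$ such that \[ ad-bc\ne0,\qquad a^2+uab-vb^2\ne0, \] and \[ u'=\frac{2ac+uad+ucb-2vbd}{a^2+uab-vb^2},\qquad v'=\frac{-c^2-ucd+vd^2}{a^2+uab-vb^2}. \]
   Context: An $m\times n\times q$ spatial matrix over $\mathbb F$ is an array $[a_{ijk}]$ ($1\le i\le m$, $1\le j\le n$, $1\le k\le q$) with entries in $\mathbb F$, written $\|A_1|\dots|A_q\|$ with horizontal slices $A_k=[a_{ijk}]_{ij}$. Two $m\times n\times q$ spatial matrices $[a_{ijk}]$ and $[b_{ijk}]$ are equivalent if there are nonsingular matrices $R=[r_{ii'}]$ ($m\times m$), $S=[s_{jj'}]$ ($n\times n$), $T=[t_{kk'}]$ ($q\times q$) with $b_{i'j'k'}=\sum_{i,j,k}a_{ijk}r_{ii'}s_{jj'}t_{kk'}$ for all $i',j',k'$. *)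

(* Defs.v *)
From HB Require Import structures.
From mathcomp Require Import all_boot all_order all_algebra.
Set Implicit Arguments. Unset Strict Implicit. Unset Printing Implicit Defensive.
Import Order.TTheory GRing.Theory Num.Theory.
Local Open Scope ring_scope.

(* An m x n x q spatial matrix over F: entries a i j k, i : 'I_m, j : 'I_n, k : 'I_q.
   The horizontal slice A_k is the m x n matrix (a i j k)_{i,j}. *)
Definition spmx (F : Type) (m n q : nat) := 'I_m -> 'I_n -> 'I_q -> F.

Definition spmx_equiv (F : fieldType) (m n q : nat) (A B : spmx F m n q) : Prop :=
  exists (R : 'M[F]_m) (S : 'M[F]_n) (T : 'M[F]_q),
    [/\ R \in unitmx, S \in unitmx, T \in unitmx &
      forall (i' : 'I_m) (j' : 'I_n) (k' : 'I_q),
        B i' j' k' = \sum_(i < m) \sum_(j < n) \sum_(k < q)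
                       A i j k * R i i' * S j j' * T k k'].

(* D(u,v) = || [1 0; 0 1] | [0 v; 1 u] || (slice k, row i, column j). *)
Definition Dsp (F : fieldType) (u v : F) : spmx F 2 2 2 :=
  fun i j k =>
    if val k == 0%N then (if val i == val j then 1 else 0)
    else if val i == 0%N then (if val j == 0%N then 0 else v)
    else (if val j == 0%N then 1 else u).

(* Main.v *)
Require Import Defs.
From HB Require Import structures.
From mathcomp Require Import all_boot all_order all_algebra.
From mathcomp Require Import ring.
Import Order.TTheory GRing.Theory Num.Theory.
Local Open Scope ring_scope.

Section Aux.
Variable F : fieldType.
Definition o0 : 'I_2 := @Ordinal 2 0 isT.
Definition o1 : 'I_2 := @Ordinal 2 1 isT.
Lemma ord2 (i : 'I_2) : i = o0 \/ i = o1.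
Proof. case: i => [[|[|i]] Hi]; [left|right|by []]; exact: val_inj. Qed.
Lemma sum2 (f : 'I_2 -> F) : \sum_(i<2) f i = f o0 + f o1.
Proof. by rewrite !big_ord_recr big_ord0 /= add0r; congr (f _ + f _); apply: val_inj. Qed.
Lemma det2 (A : 'M[F]_2) : \det A = A o0 o0 * A o1 o1 - A o0 o1 * A o1 o0.
Proof.
rewrite (expand_det_row _ o0) sum2 /cofactor !det_mx11 !mxE /=.
have -> : lift o0 0 = o1 by apply: val_inj.
have -> : lift o1 0 = o0 by apply: val_inj.
rewrite expr0 expr1 /=. ring.
Qed.
Lemma tr2 (A : 'M[F]_2) : \tr A = A o0 o0 + A o1 o1.
Proof. by rewrite /mxtrace sum2. Qed.
Definition mk2 (x00 x01 x10 x11 : F) : 'M[F]_2 :=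
  \matrix_(i,j) if i == o0 then (if j == o0 then x00 else x01)
                else (if j == o0 then x10 else x11).
Lemma mk2E x00 x01 x10 x11 :
  [/\ mk2 x00 x01 x10 x11 o0 o0 = x00, mk2 x00 x01 x10 x11 o0 o1 = x01,
      mk2 x00 x01 x10 x11 o1 o0 = x10 & mk2 x00 x01 x10 x11 o1 o1 = x11].
Proof. by rewrite !mxE. Qed.
Lemma mx2P (A B : 'M[F]_2) : A o0 o0 = B o0 o0 -> A o0 o1 = B o0 o1 ->
  A o1 o0 = B o1 o0 -> A o1 o1 = B o1 o1 -> A = B.
Proof.
move=> h1 h2 h3 h4; apply/matrixP => i j.
by case: (ord2 i) => ->; case: (ord2 j) => ->.
Qed.
End Aux.
Arguments mk2 {F}.

Lemma fwd (F : fieldType) (u v u' v' : F) :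
  spmx_equiv (Dsp u v) (Dsp u' v') ->
  exists a b c d : F,
    [/\ a * d - b * c != 0,
        a ^+ 2 + u * a * b - v * b ^+ 2 != 0,
        u' = (2 * a * c + u * a * d + u * c * b - 2 * v * b * d)
               / (a ^+ 2 + u * a * b - v * b ^+ 2) &
        v' = (- c ^+ 2 - u * c * d + v * d ^+ 2)
               / (a ^+ 2 + u * a * b - v * b ^+ 2)].
Proof.
move=> [R [S [T [uR uS uT H]]]].
pose Nk (k' : 'I_2) : 'M[F]_2 := \matrix_(i,j) \sum_k Dsp u v i j k * T k k'.
have Hk : forall k', \matrix_(i,j) Dsp u' v' i j k' = R^T *m Nk k' *m S.
  move=> k'; apply/matrixP => i j; rewrite !mxE H.
  rewrite !sum2 ?mxE ?sum2 ?mxE ?sum2 ?mxE. ring.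
pose P := Nk o0; pose Q := Nk o1.
have E0 : R^T *m P *m S = 1%:M.
  by rewrite -Hk; apply: mx2P; rewrite !mxE.
have E1 : R^T *m Q *m S = mk2 0 v' 1 u'.
  by rewrite -Hk; apply: mx2P; rewrite !mxE.
have detE : \det P * (\det R * \det S) = 1.
  have := congr1 determinant E0; rewrite !det_mulmx det_tr det1 => <-; ring.
have dP : \det P != 0.
  by apply/negP => /eqP h; move: detE; rewrite h mul0r => /eqP; rewrite eq_sym oner_eq0.
have DPE : \det P = T o0 o0 ^+ 2 + u * T o0 o0 * T o1 o0 - v * T o1 o0 ^+ 2.
  rewrite det2 !mxE !sum2 /= /Dsp /=; ring.
pose Padj := mk2 (P o1 o1) (- P o0 o1) (- P o1 o0) (P o0 o0).
have PA : P *m Padj = (\det P)%:M.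
  by apply: mx2P; rewrite det2 !mxE ?sum2 ?mxE ?sum2 ?mxE /Dsp /=; ring.
pose W := S *m R^T.
have WP : W *m P = 1%:M by rewrite /W -mulmxA; apply: mulmx1C; exact: E0.
have WA : \det P *: W = Padj.
  by rewrite -mul_mx_scalar -PA mulmxA WP mul1mx.
have hu : u' * \det P = \tr (Q *m Padj).
  have -> : u' = \tr (mk2 0 v' 1 u') by rewrite tr2 !mxE /=; ring.
  by rewrite -E1 -mulmxA mxtrace_mulC -mulmxA -/W -WA -scalemxAr mxtraceZ mulrC.
have hv : - v' * \det P = \det Q.
  have -> : - v' = \det (mk2 0 v' 1 u') by rewrite det2 !mxE /=; ring.
  rewrite -E1 !det_mulmx det_tr; rewrite -[X in _ = X]mulr1 -detE; ring.
exists (T o0 o0), (T o1 o0), (T o0 o1), (T o1 o1).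
split.
- move: uT; rewrite unitmxE unitfE det2.
  by congr (_ != _); ring.
- by rewrite -DPE.
- apply: (canRL (mulfK _)); first by rewrite -DPE.
  rewrite -DPE hu tr2 !mxE ?sum2 ?mxE ?sum2 ?mxE ?sum2 /Dsp /=; ring.
- apply: (canRL (mulfK _)); first by rewrite -DPE.
  apply: oppr_inj; rewrite -mulNr -DPE hv det2 !mxE ?sum2 ?mxE ?sum2 /Dsp /=; ring.
Qed.

Lemma nz_of (F : fieldType) (x y : F) : y != 0 -> x * y = 1 -> x != 0.
Proof. by move=> hy hxy; apply/negP => /eqP h; move: hxy; rewrite h mul0r => /eqP; rewrite eq_sym oner_eq0. Qed.

Lemma bwd (F : fieldType) (u v a b c d : F) :
  a * d - b * c != 0 -> a ^+ 2 + u * a * b - v * b ^+ 2 != 0 ->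
  spmx_equiv (Dsp u v) (Dsp ((2 * a * c + u * a * d + u * c * b - 2 * v * b * d)
               / (a ^+ 2 + u * a * b - v * b ^+ 2))
      ((- c ^+ 2 - u * c * d + v * d ^+ 2)
               / (a ^+ 2 + u * a * b - v * b ^+ 2))).
Proof.
move=> h1 h2.
exists (mk2 1 0 (- ((c * a + c * b * u - b * d * v) / (a ^+ 2 + u * a * b - v * b ^+ 2)) / ((a * d - b * c) / (a ^+ 2 + u * a * b - v * b ^+ 2))) (1 / ((a * d - b * c) / (a ^+ 2 + u * a * b - v * b ^+ 2)))), (mk2 ((a + b * u) / (a ^+ 2 + u * a * b - v * b ^+ 2)) ((((c * a + c * b * u - b * d * v) / (a ^+ 2 + u * a * b - v * b ^+ 2)) * (a + b * u) - b * v * ((a * d - b * c) / (a ^+ 2 + u * a * b - v * b ^+ 2))) / (a ^+ 2 + u * a * b - v * b ^+ 2)) (- b / (a ^+ 2 + u * a * b - v * b ^+ 2)) ((a * ((a * d - b * c) / (a ^+ 2 + u * a * b - v * b ^+ 2)) - b * ((c * a + c * b * u - b * d * v) / (a ^+ 2 + u * a * b - v * b ^+ 2))) / (a ^+ 2 + u * a * b - v * b ^+ 2))), (mk2 a c b d).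
split.
- rewrite unitmxE unitfE det2 !mxE /=.
  apply: (@nz_of _ _ ((a * d - b * c) / (a ^+ 2 + u * a * b - v * b ^+ 2))); first by rewrite ?mulf_neq0 ?invr_neq0 ?expf_neq0.
  field; by rewrite ?h1 ?h2.
- rewrite unitmxE unitfE det2 !mxE /=.
  apply: (@nz_of _ _ ((a ^+ 2 + u * a * b - v * b ^+ 2) ^+ 2 / (a * d - b * c))); first by rewrite ?mulf_neq0 ?invr_neq0 ?expf_neq0.
  field; by rewrite ?h1 ?h2.
- rewrite unitmxE unitfE det2 !mxE /=.
  apply: (@nz_of _ _ ((a * d - b * c))^-1); first by rewrite ?mulf_neq0 ?invr_neq0 ?expf_neq0.
  field; by rewrite ?h1 ?h2.
move=> i j k.
case: (ord2 i) => ->; case: (ord2 j) => ->; case: (ord2 k) => ->;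
  rewrite ?sum2 ?sum2 ?sum2 !mxE /Dsp /=; field; by rewrite ?h1 ?h2.
Qed.

Theorem lemma3 (F : fieldType) (u v u' v' : F) :
  spmx_equiv (Dsp u v) (Dsp u' v') <->
  exists a b c d : F,
    [/\ a * d - b * c != 0,
        a ^+ 2 + u * a * b - v * b ^+ 2 != 0,
        u' = (2 * a * c + u * a * d + u * c * b - 2 * v * b * d)
               / (a ^+ 2 + u * a * b - v * b ^+ 2) &
        v' = (- c ^+ 2 - u * c * d + v * d ^+ 2)
               / (a ^+ 2 + u * a * b - v * b ^+ 2)].
Proof.
split; first exact: fwd.
by move=> [a [b [c [d [h1 h2 -> ->]]]]]; apply: bwd.
Qed.
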